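(* Let $r\in\mathbb{N}_0$ and $I=[-1,1]$. (i) If $\lambda\in(-1,1)$, then there exists $f\in C^r(I)$ with $f\equiv0$ on $[-1,\lambda]$ such that there is no $g\in C^{r+1}(I)$ satisfying $g^{(i)}(\lambda)=f^{(i)}(\lambda)$ for $0\le i\le\tilde r$ and $g\ge f$ on $(\lambda-\varepsilon,\lambda+\varepsilon)$ for some $\varepsilon>0$, where $\tilde r:=2\lfloor r/2\rfloor$ (i.e. $\tilde r=r-1$ if $r$ is odd and $\tilde r=r$ if $r$ is even). (ii) If $\lambda=\pm1$, then there exists $f\in C^r(I)$ such that there is no $g\in C^{r+1}(I)$ satisfying $g^{(i)}(\lambda)=f^{(i)}(\lambda)$ for $0\le i\le r$ and $g\ge f$ on $(\lambda-\varepsilon,\lambda+\varepsilon)\cap I$ for some $\varepsilon>0$. *)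

(* Defs.v *)
From Stdlib Require Import Reals Lra.
Open Scope R_scope.

Definition inI (x : R) : Prop := -1 <= x <= 1.

Definition deriv_on_I (f f' : R -> R) : Prop :=
  forall x, inI x -> forall eps, 0 < eps -> exists delta, 0 < delta /\
    forall y, inI y -> y <> x -> Rabs (y - x) < delta ->
      Rabs ((f y - f x) / (y - x) - f' x) < eps.

Definition cont_on_I (f : R -> R) : Prop :=
  forall x, inI x -> forall eps, 0 < eps -> exists delta, 0 < delta /\
    forall y, inI y -> Rabs (y - x) < delta -> Rabs (f y - f x) < eps.

(* D is a family of derivatives witnessing f in C^r(I):
   D 0 = f on I, D (i+1) is the derivative of D i on I for i < r,
   and D r is continuous on I.  Then D i = f^(i) on I for i <= r. *)
Definition Cr_derivs (r : nat) (f : R -> R) (D : nat -> R -> R) : Prop :=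
  (forall x, inI x -> D 0%nat x = f x) /\
  (forall i, (i < r)%nat -> deriv_on_I (D i) (D (S i))) /\
  cont_on_I (D r).

Definition Cr (r : nat) (f : R -> R) : Prop := exists D, Cr_derivs r f D.

(* Main.v *)
Require Import Defs.
From Stdlib Require Import Reals Arith Lra Lia.
Open Scope R_scope.

Lemma sqrt_cont_all x : continuity_pt sqrt x.
Proof.
  destruct (Rle_lt_dec 0 x) as [H|H]; [now apply continuity_pt_sqrt|].
  intros eps Heps. exists (-x). split; [lra|].
  intros y [_ Hy]. simpl in *. unfold R_dist in *.
  rewrite (sqrt_neg_0 x) by lra.
  apply Rabs_def2 in Hy. rewrite (sqrt_neg_0 y) by lra.
  rewrite Rminus_0_r, Rabs_R0. lra.
Qed.

Lemma cont_pt_I (u : R -> R) : (forall x, continuity_pt u x) -> cont_on_I u.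
Proof.
  intros H x _ eps Heps. destruct (H x eps Heps) as [d [Hd Hy]].
  exists d; split; auto. intros y _ Hyx.
  destruct (Req_dec y x) as [->|Hne].
  - rewrite Rminus_diag, Rabs_R0; lra.
  - apply (Hy y). split; [split; [exact I| congruence]|]. simpl; unfold R_dist; auto.
Qed.

Lemma deriv_pt_I (u u' : R -> R) :
  (forall x, derivable_pt_lim u x (u' x)) -> deriv_on_I u u'.
Proof.
  intros H x _ eps Heps. destruct (H x eps Heps) as [d Hd].
  exists d; split; [apply cond_pos|]. intros y _ Hne Hyx.
  specialize (Hd (y - x)). replace (x + (y - x)) with y in Hd by ring.
  apply Hd; auto. lra.
Qed.

Definition G (n : nat) (t : R) : R := t ^ n * sqrt t.

Lemma G_nonpos n t : t <= 0 -> G n t = 0.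
Proof. intros. unfold G. rewrite sqrt_neg_0 by lra. ring. Qed.

Lemma G_small n eps : 0 < eps -> exists d, 0 < d /\ forall h, Rabs h < d -> Rabs (G n h) < eps.
Proof.
  intros He. exists (Rmin 1 (eps*eps)). split.
  { apply Rmin_glb_lt; nra. }
  intros h Hh.
  destruct (Rle_lt_dec h 0) as [Hn|Hp].
  { rewrite G_nonpos by auto. rewrite Rabs_R0; auto. }
  assert (h < 1) by (rewrite Rabs_right in Hh by lra; apply Rlt_le_trans with (1:=Hh); apply Rmin_l).
  assert (h < eps*eps) by (rewrite Rabs_right in Hh by lra; apply Rlt_le_trans with (1:=Hh); apply Rmin_r).
  unfold G. rewrite Rabs_right.
  2:{ apply Rle_ge, Rmult_le_pos; [apply pow_le; lra| apply sqrt_pos]. }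
  assert (Hs : sqrt h < eps).
  { rewrite <- (sqrt_square eps) by lra. apply sqrt_lt_1_alt. lra. }
  assert (Hp1 : h ^ n <= 1).
  { rewrite <- (pow1 n). apply pow_incr. lra. }
  assert (0 <= h^n) by (apply pow_le; lra).
  pose proof (sqrt_pos h). nra.
Qed.

Lemma G_deriv n t : derivable_pt_lim (G (S n)) t ((INR n + 3/2) * G n t).
Proof.
  destruct (Rtotal_order t 0) as [Hn|[Hz|Hp]].
  - intros eps He. exists (mkposreal (-t) ltac:(lra)). intros h Hh0 Hh. simpl in Hh.
    apply Rabs_def2 in Hh.
    rewrite !G_nonpos by lra. unfold Rdiv. rewrite Rminus_0_r, Rmult_0_l, Rmult_0_r, Rminus_0_r, Rabs_R0. lra.
  - subst. intros eps He. destruct (G_small n eps He) as [d [Hd Hs]].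
    exists (mkposreal d Hd). intros h Hh0 Hh. simpl in Hh.
    rewrite Rplus_0_l, (G_nonpos n 0), (G_nonpos (S n) 0) by lra.
    replace ((G (S n) h - 0) / h - (INR n + 3/2) * 0) with (G n h).
    + auto.
    + unfold G. simpl. field. auto.
  - assert (Hd : derivable_pt_lim (fun y => y ^ S n * sqrt y) t
        ((INR (S n) * t ^ Init.Nat.pred (S n)) * sqrt t + t ^ S n * / (2 * sqrt t))).
    { apply (derivable_pt_lim_mult (fun y => y ^ S n) sqrt).
      apply derivable_pt_lim_pow. apply derivable_pt_lim_sqrt; auto. }
    replace ((INR n + 3/2) * G n t) with
      ((INR (S n) * t ^ Init.Nat.pred (S n)) * sqrt t + t ^ S n * / (2 * sqrt t)).
    + exact Hd.
    + unfold G. simpl Init.Nat.pred. rewrite S_INR. simpl pow.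
      assert (Hs : 0 < sqrt t) by (apply sqrt_lt_R0; auto).
      pose proof (sqrt_sqrt t ltac:(lra)) as Hst.
      replace (t * t ^ n) with (sqrt t * sqrt t * t ^ n) by (rewrite Hst; ring).
      field. lra.
Qed.

Fixpoint cc (s : R) (r i : nat) : R :=
  match i with O => 1 | S j => cc s r j * s * (INR (r - S j) + 3/2) end.

Definition DD s r lam (i : nat) (x : R) := cc s r i * G (r - i) (s * (x - lam)).
Definition ff s r lam (x : R) := G r (s * (x - lam)).

Lemma lin_deriv s lam x : derivable_pt_lim (fun x => s * (x - lam)) x s.
Proof.
  intros eps He. exists (mkposreal 1 ltac:(lra)). intros h Hh _.
  replace ((s * (x + h - lam) - s * (x - lam)) / h - s) with 0 by (field; auto).
  rewrite Rabs_R0; auto.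
Qed.

Lemma ff_Cr s r lam : Cr_derivs r (ff s r lam) (DD s r lam).
Proof.
  split; [|split].
  - intros x _. unfold DD, ff. simpl. rewrite Nat.sub_0_r. ring.
  - intros i Hi. apply deriv_pt_I. intros x. unfold DD.
    replace (r - i)%nat with (S (r - S i)) by lia.
    simpl cc.
    replace (cc s r i * s * (INR (r - S i) + 3 / 2) * G (r - S i) (s * (x - lam)))
      with (cc s r i * (((INR (r - S i) + 3/2) * G (r - S i) (s * (x - lam))) * s)) by ring.
    apply derivable_pt_lim_scal.
    apply (derivable_pt_lim_comp (fun x => s * (x - lam)) (G (S (r - S i)))).
    + apply lin_deriv.
    + apply G_deriv.
  - apply cont_pt_I. intros x. unfold DD. rewrite Nat.sub_diag.
    apply continuity_pt_scal.
    change (continuity_pt (fun y => 1 * comp sqrt (fun x => s * (x - lam)) y) x).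
    apply continuity_pt_scal. apply continuity_pt_comp.
    + apply derivable_continuous_pt. exists s. apply lin_deriv.
    + apply sqrt_cont_all.
Qed.

Lemma deriv_unique u u' v v' : deriv_on_I u u' -> deriv_on_I v v' ->
  (forall x, inI x -> u x = v x) -> forall x, inI x -> u' x = v' x.
Proof.
  intros Hu Hv E x Hx.
  destruct (Req_dec (u' x) (v' x)) as [|Hne]; auto. exfalso.
  set (e := Rabs (u' x - v' x) / 2).
  assert (He : 0 < e) by (unfold e; assert (u' x - v' x <> 0) by (intro; apply Hne; lra); pose proof (Rabs_pos_lt _ H); lra).
  destruct (Hu x Hx e He) as [d1 [Hd1 H1]].
  destruct (Hv x Hx e He) as [d2 [Hd2 H2]].
  set (d := Rmin 1 (Rmin d1 d2) / 2).
  assert (Hd : 0 < d) by (unfold d; assert (0 < Rmin 1 (Rmin d1 d2)) by (repeat apply Rmin_glb_lt; lra); lra).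
  assert (Hdd1 : d < d1) by (unfold d; pose proof (Rmin_r 1 (Rmin d1 d2)); pose proof (Rmin_l d1 d2); lra).
  assert (Hdd2 : d < d2) by (unfold d; pose proof (Rmin_r 1 (Rmin d1 d2)); pose proof (Rmin_r d1 d2); lra).
  assert (Hd1' : d <= 1/2) by (unfold d; pose proof (Rmin_l 1 (Rmin d1 d2)); lra).
  unfold inI in Hx.
  set (y := if Rle_dec x 0 then x + d else x - d).
  assert (Hy : inI y /\ y <> x /\ Rabs (y - x) = d).
  { unfold y, inI; destruct (Rle_dec x 0).
    - replace (x + d - x) with d by ring. rewrite Rabs_right by lra. repeat split; lra.
    - replace (x - d - x) with (-d) by ring. rewrite Rabs_Ropp, Rabs_right by lra. repeat split; lra. }
  destruct Hy as [HyI [Hyx Hya]].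
  specialize (H1 y HyI Hyx ltac:(lra)). specialize (H2 y HyI Hyx ltac:(lra)).
  rewrite (E y HyI), (E x (conj (proj1 Hx) (proj2 Hx))) in H1.
  set (q := (v y - v x) / (y - x)) in *.
  assert (Rabs (u' x - v' x) <= Rabs (q - u' x) + Rabs (q - v' x)).
  { replace (u' x - v' x) with ((q - v' x) - (q - u' x)) by ring.
    eapply Rle_trans; [apply Rabs_triang|]. rewrite Rabs_Ropp. lra. }
  unfold e in *. lra.
Qed.

Lemma derivs_agree r f D1 D2 : Cr_derivs r f D1 -> Cr_derivs r f D2 ->
  forall i, (i <= r)%nat -> forall x, inI x -> D1 i x = D2 i x.
Proof.
  intros [A1 [B1 _]] [A2 [B2 _]]. induction i; intros Hi x Hx.
  - rewrite A1, A2; auto.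
  - apply (deriv_unique (D1 i) _ (D2 i)); auto; try (apply B1; lia); try (apply B2; lia).
    intros; apply IHi; auto; lia.
Qed.

Lemma ff_derivs_zero s r lam Df : inI lam -> Cr_derivs r (ff s r lam) Df ->
  forall i, (i <= r)%nat -> Df i lam = 0.
Proof.
  intros Hl HD i Hi. rewrite (derivs_agree r _ Df (DD s r lam) HD (ff_Cr s r lam) i Hi lam Hl).
  unfold DD. rewrite Rminus_diag, Rmult_0_r, G_nonpos by lra. ring.
Qed.

Definition clamp x := Rmax (-1) (Rmin x 1).

Lemma clamp_I x : inI (clamp x).
Proof. unfold clamp, inI, Rmax, Rmin. repeat destruct Rle_dec; lra. Qed.
Lemma clamp_id x : inI x -> clamp x = x.
Proof. unfold clamp, inI, Rmax, Rmin. repeat destruct Rle_dec; lra. Qed.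
Lemma clamp_lip x y : Rabs (clamp y - clamp x) <= Rabs (y - x).
Proof. unfold clamp, Rmax, Rmin. unfold Rabs. repeat destruct Rle_dec; repeat destruct Rcase_abs; lra. Qed.

Lemma deriv_cont u u' : deriv_on_I u u' -> cont_on_I u.
Proof.
  intros H x Hx eps He. destruct (H x Hx 1 ltac:(lra)) as [d [Hd Hy]].
  set (K := Rabs (u' x) + 1).
  assert (HK : 0 < K) by (unfold K; pose proof (Rabs_pos (u' x)); lra).
  exists (Rmin d (eps / K)). split. { apply Rmin_glb_lt; auto. apply Rdiv_lt_0_compat; auto. }
  intros y HyI Hyx.
  destruct (Req_dec y x) as [->|Hne]. { rewrite Rminus_diag, Rabs_R0; auto. }
  assert (Hq := Hy y HyI Hne (Rlt_le_trans _ _ _ Hyx (Rmin_l _ _))).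
  assert (Hyx2 := Rlt_le_trans _ _ _ Hyx (Rmin_r _ _)).
  assert (Hq2 : Rabs ((u y - u x) / (y - x)) <= K).
  { unfold K. replace ((u y - u x) / (y - x)) with (((u y - u x) / (y - x) - u' x) + u' x) by ring.
    eapply Rle_trans; [apply Rabs_triang|]. lra. }
  replace (u y - u x) with ((u y - u x) / (y - x) * (y - x)) by (field; lra).
  rewrite Rabs_mult.
  assert (0 < Rabs (y - x)) by (apply Rabs_pos_lt; lra).
  apply Rle_lt_trans with (K * Rabs (y - x)). { apply Rmult_le_compat_r; lra. }
  apply Rmult_lt_reg_r with (/ K). { apply Rinv_0_lt_compat; auto. }
  replace (K * Rabs (y - x) * / K) with (Rabs (y - x)) by (field; lra).
  exact Hyx2.
Qed.

Lemma MVT_I u u' a b : deriv_on_I u u' -> inI a -> inI b -> a < b ->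
  exists c, a < c < b /\ u b - u a = u' c * (b - a).
Proof.
  intros Hd Ha Hb Hab.
  set (h := fun x => u (clamp x)).
  assert (Hder : forall c, a < c < b -> derivable_pt_lim h c (u' c)).
  { intros c Hc eps He. unfold inI in *.
    destruct (Hd c ltac:(unfold inI; lra) eps He) as [d [Hd0 Hq]].
    assert (Hp : 0 < Rmin d (Rmin (1 - c) (c + 1))) by (repeat apply Rmin_glb_lt; lra).
    exists (mkposreal _ Hp). intros k Hk0 Hk. simpl in Hk.
    pose proof (Rmin_l d (Rmin (1 - c) (c + 1))).
    pose proof (Rmin_r d (Rmin (1 - c) (c + 1))).
    pose proof (Rmin_l (1 - c) (c + 1)). pose proof (Rmin_r (1 - c) (c + 1)).
    apply Rabs_def2 in Hk as Hk'.
    unfold h. rewrite !clamp_id by (unfold inI; lra).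
    specialize (Hq (c + k) ltac:(unfold inI; lra) ltac:(lra)).
    replace (c + k - c) with k in Hq by ring. apply Hq. replace (c+k-c) with k by ring. lra. }
  assert (Hcont : forall c, a <= c <= b -> continuity_pt h c).
  { intros c Hc eps He. assert (HcI : inI c) by (unfold inI in *; lra).
    destruct (deriv_cont u u' Hd c HcI eps He) as [d [Hd0 Hy]].
    exists d. split; auto. intros y [_ Hyd]. simpl in *. unfold R_dist in *.
    unfold h. rewrite (clamp_id c HcI). apply Hy. apply clamp_I.
    pose proof (clamp_lip c y) as L. rewrite (clamp_id c HcI) in L. lra. }
  destruct (MVT h id a b (fun c P => exist _ (u' c) (Hder c P))
             (fun c _ => derivable_pt_id c) Hab Hcont
             (fun c _ => derivable_continuous_pt _ _ (derivable_pt_id c))) as [c [P E]].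
  exists c. split; auto. simpl in E. rewrite derive_pt_id in E. unfold id, h in E.
  rewrite !clamp_id in E by auto. lra.
Qed.

Lemma P1 u u' lam d K j : deriv_on_I u u' -> inI lam -> u lam = 0 -> 0 <= K ->
  (forall x, inI x -> Rabs (x - lam) < d -> Rabs (u' x) <= K * Rabs (x - lam) ^ j) ->
  (forall x, inI x -> Rabs (x - lam) < d -> Rabs (u x) <= K * Rabs (x - lam) ^ S j).
Proof.
  intros Hd Hl H0 HK Hb x Hx Hxd. unfold inI in *.
  destruct (Rtotal_order x lam) as [Hlt|[Heq|Hgt]].
  - destruct (MVT_I u u' x lam Hd Hx Hl Hlt) as [c [Hc E]].
    assert (Hc1 : Rabs (c - lam) <= Rabs (x - lam)).
    { rewrite !Rabs_left by lra. lra. }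
    assert (Hcb := Hb c ltac:(unfold inI; lra) ltac:(lra)).
    replace (u x) with (- (u' c * (lam - x))) by lra.
    rewrite Rabs_Ropp, Rabs_mult. rewrite (Rabs_right (lam - x)) by lra.
    replace (lam - x) with (Rabs (x - lam)) by (rewrite Rabs_left; lra).
    simpl. rewrite (Rmult_comm (Rabs (x - lam))), <- Rmult_assoc.
    apply Rmult_le_compat_r; [apply Rabs_pos|].
    eapply Rle_trans; [exact Hcb|]. apply Rmult_le_compat_l; auto.
    apply pow_incr. split; [apply Rabs_pos| auto].
  - subst. rewrite H0, Rminus_diag, Rabs_R0. simpl. lra.
  - destruct (MVT_I u u' lam x Hd Hl Hx Hgt) as [c [Hc E]].
    assert (Hc1 : Rabs (c - lam) <= Rabs (x - lam)).
    { rewrite !Rabs_right by lra. lra. }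
    assert (Hcb := Hb c ltac:(unfold inI; lra) ltac:(lra)).
    replace (u x) with (u' c * (x - lam)) by lra.
    rewrite Rabs_mult.
    simpl. rewrite (Rmult_comm (Rabs (x - lam))), <- Rmult_assoc.
    apply Rmult_le_compat_r; [apply Rabs_pos|].
    eapply Rle_trans; [exact Hcb|]. apply Rmult_le_compat_l; auto.
    apply pow_incr. split; [apply Rabs_pos| auto].
Qed.

Lemma P2 u u' lam d K j : deriv_on_I u u' -> inI lam -> u lam <= 0 -> 0 <= K ->
  (forall x, inI x -> lam <= x -> x - lam < d -> u' x <= K * (x - lam) ^ j) ->
  (forall x, inI x -> lam <= x -> x - lam < d -> u x <= K * (x - lam) ^ S j).
Proof.
  intros Hd Hl H0 HK Hb x Hx Hlx Hxd. unfold inI in *.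
  destruct (Rle_lt_or_eq_dec _ _ Hlx) as [Hgt|Heq].
  - destruct (MVT_I u u' lam x Hd Hl Hx Hgt) as [c [Hc E]].
    assert (Hcb := Hb c ltac:(unfold inI; lra) ltac:(lra) ltac:(lra)).
    replace (u x) with (u lam + u' c * (x - lam)) by lra.
    simpl. assert (K * (c - lam) ^ j <= K * (x - lam) ^ j).
    { apply Rmult_le_compat_l; auto. apply pow_incr. lra. }
    assert (u' c * (x - lam) <= K * (x - lam) ^ j * (x - lam)).
    { apply Rmult_le_compat_r; lra. }
    nra.
  - subst. rewrite Rminus_diag. simpl. lra.
Qed.

Lemma P3 u u' lam d sg : deriv_on_I u u' -> inI lam -> u lam = 0 ->
  (forall x, inI x -> lam - d < x < lam -> sg * u' x > 0) ->
  (forall x, inI x -> lam - d < x < lam -> - sg * u x > 0).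
Proof.
  intros Hd Hl H0 Hb x Hx Hxd. unfold inI in *.
  destruct (MVT_I u u' x lam Hd Hx Hl ltac:(lra)) as [c [Hc E]].
  assert (Hcb := Hb c ltac:(unfold inI; lra) ltac:(lra)).
  replace (u x) with (- (u' c * (lam - x))) by lra.
  replace (- sg * - (u' c * (lam - x))) with ((sg * u' c) * (lam - x)) by ring.
  apply Rmult_gt_0_compat; lra.
Qed.

Lemma final r M tau : 0 < tau -> 0 <= M ->
  (forall t, 0 < t < tau -> G r t <= M * t ^ S r) -> False.
Proof.
  intros Ht HM H.
  set (a := / (2 * (M + 1))).
  assert (Ha : 0 < a) by (unfold a; apply Rinv_0_lt_compat; lra).
  set (t := Rmin (tau / 2) (a * a)).
  assert (Htp : 0 < t) by (unfold t; apply Rmin_glb_lt; nra).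
  assert (Htt : t < tau) by (unfold t; pose proof (Rmin_l (tau/2) (a*a)); lra).
  assert (Hta : t <= a * a) by (unfold t; apply Rmin_r).
  specialize (H t (conj Htp Htt)). unfold G in H. simpl in H.
  assert (Hpos : 0 < t ^ r) by (apply pow_lt; auto).
  assert (Hs : sqrt t <= M * t).
  { apply Rmult_le_reg_l with (t ^ r); auto. nra. }
  assert (Hsp : 0 < sqrt t) by (apply sqrt_lt_R0; auto).
  pose proof (sqrt_sqrt t ltac:(lra)) as Hst.
  assert (H1 : 1 <= M * sqrt t).
  { apply Rmult_le_reg_l with (sqrt t); auto. nra. }
  assert (Hsa : sqrt t <= a).
  { rewrite <- (sqrt_square a) by lra. apply sqrt_le_1_alt. auto. }
  assert (M * a < 1).
  { unfold a. apply Rmult_lt_reg_r with (2 * (M + 1)); [lra|].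
    field_simplify; lra. }
  nra.
Qed.

Lemma top_bound r g Dg lam : Cr_derivs (S r) g Dg -> inI lam ->
  exists d M, 0 < d /\ 0 <= M /\ forall x, inI x -> Rabs (x - lam) < d -> Rabs (Dg (S r) x) <= M.
Proof.
  intros [_ [_ Hc]] Hl. destruct (Hc lam Hl 1 ltac:(lra)) as [d [Hd Hy]].
  exists d, (Rabs (Dg (S r) lam) + 1). split; auto. split. { pose proof (Rabs_pos (Dg (S r) lam)); lra. }
  intros x Hx Hxd. specialize (Hy x Hx Hxd).
  replace (Dg (S r) x) with ((Dg (S r) x - Dg (S r) lam) + Dg (S r) lam) by ring.
  eapply Rle_trans; [apply Rabs_triang|]. lra.
Qed.

Lemma boundA r g Dg lam : Cr_derivs (S r) g Dg -> inI lam ->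
  (forall i, (i <= r)%nat -> Dg i lam = 0) ->
  exists d M, 0 < d /\ 0 <= M /\ forall x, inI x -> Rabs (x - lam) < d ->
     Rabs (g x) <= M * Rabs (x - lam) ^ S r.
Proof.
  intros HC Hl Hz. destruct (top_bound r g Dg lam HC Hl) as [d [M [Hd [HM Hb]]]].
  exists d, M. split; auto. split; auto.
  assert (Cl : forall j, (j <= S r)%nat -> forall x, inI x -> Rabs (x - lam) < d ->
      Rabs (Dg (S r - j)%nat x) <= M * Rabs (x - lam) ^ j).
  { induction j; intros Hj.
    - intros x Hx Hxd. rewrite Nat.sub_0_r. simpl. rewrite Rmult_1_r. auto.
    - destruct HC as [H0 [Hder _]].
      apply (P1 (Dg (S r - S j)%nat) (Dg (S r - j)%nat)); auto.
      + replace (S r - j)%nat with (S (S r - S j)) by lia. apply Hder. lia.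
      + apply Hz. lia.
      + apply IHj. lia. }
  intros x Hx Hxd. destruct HC as [H0 _]. rewrite <- H0 by auto.
  replace 0%nat with (S r - S r)%nat by lia. apply Cl; auto.
Qed.

Lemma caseA r g Dg lam s tau0 eps : Cr_derivs (S r) g Dg -> inI lam ->
  (s = 1 \/ s = -1) -> 0 < tau0 -> (forall t, 0 < t < tau0 -> inI (lam + s * t)) ->
  (forall i, (i <= r)%nat -> Dg i lam = 0) -> 0 < eps ->
  (forall x, inI x -> lam - eps < x < lam + eps -> g x >= ff s r lam x) -> False.
Proof.
  intros HC Hl Hs Ht0 HtI Hz He Hge.
  destruct (boundA r g Dg lam HC Hl Hz) as [d [M [Hd [HM Hb]]]].
  apply (final r M (Rmin tau0 (Rmin d eps))); auto.
  { repeat apply Rmin_glb_lt; auto. }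
  intros t [Htp Htt].
  pose proof (Rmin_l tau0 (Rmin d eps)). pose proof (Rmin_r tau0 (Rmin d eps)).
  pose proof (Rmin_l d eps). pose proof (Rmin_r d eps).
  assert (HxI := HtI t ltac:(lra)).
  assert (Ha : Rabs (lam + s * t - lam) = t).
  { replace (lam + s * t - lam) with (s * t) by ring.
    destruct Hs as [-> | ->]; unfold Rabs; destruct Rcase_abs; lra. }
  assert (Hg1 := Hb _ HxI ltac:(lra)). rewrite Ha in Hg1.
  assert (Hg2 : g (lam + s * t) >= ff s r lam (lam + s * t)).
  { apply Hge; auto. destruct Hs as [-> | ->]; lra. }
  unfold ff in Hg2. replace (s * (lam + s * t - lam)) with t in Hg2
    by (destruct Hs as [-> | ->]; ring).
  pose proof (Rle_abs (g (lam + s * t))). lra.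
Qed.

Lemma caseB m g Dg lam eps : let r := (2 * m + 1)%nat in
  Cr_derivs (S r) g Dg -> -1 < lam < 1 ->
  (forall i, (i <= 2 * m)%nat -> Dg i lam = 0) -> 0 < eps ->
  (forall x, inI x -> lam - eps < x < lam + eps -> g x >= ff 1 r lam x) -> False.
Proof.
  intros r HC Hl Hz He Hge.
  assert (HlI : inI lam) by (unfold inI; lra).
  pose proof HC as [H0 [Hder Hcont]].
  destruct (Rlt_le_dec 0 (Dg r lam)) as [Hc|Hc].
  - (* positive: contradiction on the left *)
    assert (Hdr : deriv_on_I (Dg r) (Dg (S r))) by (apply Hder; lia).
    destruct (deriv_cont _ _ Hdr lam HlI (Dg r lam) Hc) as [d [Hd Hy]].
    set (d2 := Rmin d (lam + 1)).
    assert (Hd2 : 0 < d2) by (apply Rmin_glb_lt; lra).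
    assert (d2 <= d) by apply Rmin_l. assert (d2 <= lam + 1) by apply Rmin_r.
    assert (Cl : forall j, (j <= r)%nat -> forall x, inI x -> lam - d2 < x < lam ->
       (-1) ^ j * Dg (r - j)%nat x > 0).
    { induction j; intros Hj.
      - intros x Hx Hxd. rewrite Nat.sub_0_r. simpl.
        assert (Hxl : Rabs (x - lam) < d) by (rewrite Rabs_left; lra).
        assert (Hyx := Hy x Hx Hxl). apply Rabs_def2 in Hyx. lra.
      - replace ((-1) ^ S j) with (- (-1) ^ j) by (simpl; ring).
        apply (P3 (Dg (r - S j)%nat) (Dg (r - j)%nat)); auto.
        + replace (r - j)%nat with (S (r - S j)) by lia. apply Hder. lia.
        + apply Hz. unfold r in *. lia.
        + apply IHj. lia. }
    set (x := lam - Rmin d2 eps / 2).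
    assert (Hm : 0 < Rmin d2 eps) by (apply Rmin_glb_lt; lra).
    pose proof (Rmin_l d2 eps). pose proof (Rmin_r d2 eps).
    assert (HxI : inI x) by (unfold x, inI; lra).
    assert (Hx1 := Cl r (le_n r) x HxI ltac:(unfold x; lra)).
    rewrite Nat.sub_diag, H0 in Hx1 by auto.
    replace ((-1) ^ r) with (-1) in Hx1.
    2:{ unfold r. rewrite pow_add, pow_mult. replace ((-1)^2) with 1 by ring. rewrite pow1. ring. }
    assert (Hg := Hge x HxI ltac:(unfold x; lra)).
    unfold ff in Hg. rewrite G_nonpos in Hg by (unfold x; lra). lra.
  - (* nonpositive: upper bound on the right *)
    destruct (top_bound r g Dg lam HC HlI) as [d [M [Hd [HM Hb]]]].
    assert (Cl : forall j, (j <= S r)%nat -> forall x, inI x -> lam <= x -> x - lam < d ->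
      Dg (S r - j)%nat x <= M * (x - lam) ^ j).
    { induction j; intros Hj.
      - intros x Hx Hlx Hxd. rewrite Nat.sub_0_r. simpl. rewrite Rmult_1_r.
        eapply Rle_trans; [apply Rle_abs|]. apply Hb; auto. rewrite Rabs_right; lra.
      - apply (P2 (Dg (S r - S j)%nat) (Dg (S r - j)%nat)); auto.
        + replace (S r - j)%nat with (S (S r - S j)) by lia. apply Hder. lia.
        + destruct j.
          * replace (S r - 1)%nat with r by lia. auto.
          * rewrite Hz by (unfold r in *; lia). lra.
        + apply IHj. lia. }
    apply (final r M (Rmin (1 - lam) (Rmin d eps))); auto.
    { repeat apply Rmin_glb_lt; lra. }
    intros t [Htp Htt].
    pose proof (Rmin_l (1 - lam) (Rmin d eps)). pose proof (Rmin_r (1 - lam) (Rmin d eps)).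
    pose proof (Rmin_l d eps). pose proof (Rmin_r d eps).
    assert (HxI : inI (lam + t)) by (unfold inI; lra).
    assert (Hg1 := Cl (S r) (le_n _) (lam + t) HxI ltac:(lra) ltac:(lra)).
    rewrite Nat.sub_diag, H0 in Hg1 by auto.
    replace (lam + t - lam) with t in Hg1 by ring.
    assert (Hg2 := Hge (lam + t) HxI ltac:(lra)).
    unfold ff in Hg2. replace (1 * (lam + t - lam)) with t in Hg2 by ring. lra.
Qed.

Theorem lemma3p1 (r : nat) :
  (* (i) interior points, rt = 2 * floor (r/2) *)
  (forall lam, -1 < lam < 1 ->
    exists f, Cr r f /\ (forall x, -1 <= x <= lam -> f x = 0) /\
      forall Df, Cr_derivs r f Df ->
      ~ (exists g Dg, Cr_derivs (S r) g Dg /\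
           (forall i, (i <= 2 * (r / 2))%nat -> Dg i lam = Df i lam) /\
           exists eps, 0 < eps /\
             forall x, inI x -> lam - eps < x < lam + eps -> g x >= f x)) /\
  (* (ii) endpoints *)
  (forall lam, lam = -1 \/ lam = 1 ->
    exists f, Cr r f /\
      forall Df, Cr_derivs r f Df ->
      ~ (exists g Dg, Cr_derivs (S r) g Dg /\
           (forall i, (i <= r)%nat -> Dg i lam = Df i lam) /\
           exists eps, 0 < eps /\
             forall x, inI x -> lam - eps < x < lam + eps -> g x >= f x)).
Proof.
  split.
  - intros lam Hl. exists (ff 1 r lam). split; [exists (DD 1 r lam); apply ff_Cr|].
    split.
    { intros x Hx. unfold ff. apply G_nonpos. lra. }
    intros Df HDf [g [Dg [HC [Hm [eps [He Hge]]]]]].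
    assert (HlI : inI lam) by (unfold inI; lra).
    pose proof (Nat.div_mod r 2 ltac:(lia)) as Hdm.
    pose proof (Nat.mod_upper_bound r 2 ltac:(lia)) as Hmb.
    assert (Hz : forall i, (i <= 2 * (r / 2))%nat -> Dg i lam = 0).
    { intros i Hi. rewrite Hm by auto. apply (ff_derivs_zero 1 r lam Df HlI HDf). lia. }
    destruct (Nat.Even_or_Odd r) as [[m Hr]|[m Hr]].
    + assert (Hq : (r / 2 = m)%nat) by lia.
      apply (caseA r g Dg lam 1 (1 - lam) eps HC HlI (or_introl eq_refl)); auto.
      * lra.
      * intros t Ht. unfold inI. lra.
      * intros i Hi. apply Hz. lia.
    + assert (Hq : (r / 2 = m)%nat) by lia.
      subst r. apply (caseB m g Dg lam eps HC Hl); auto.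
      intros i Hi. apply Hz. rewrite Hq. auto.
  - intros lam Hl.
    set (s := if Rle_dec lam 0 then 1 else -1).
    assert (Hs : s = 1 \/ s = -1) by (unfold s; destruct Rle_dec; auto).
    assert (HlI : inI lam) by (unfold inI; lra).
    assert (HtI : forall t, 0 < t < 2 -> inI (lam + s * t)).
    { intros t Ht. unfold s, inI. destruct Rle_dec; destruct Hl; subst; lra. }
    exists (ff s r lam). split; [exists (DD s r lam); apply ff_Cr|].
    intros Df HDf [g [Dg [HC [Hm [eps [He Hge]]]]]].
    apply (caseA r g Dg lam s 2 eps HC HlI Hs ltac:(lra) HtI); auto.
    intros i Hi. rewrite Hm by auto. apply (ff_derivs_zero s r lam Df HlI HDf). auto.
Qed.
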